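(* With the relaxed barrier functions $\hat B_x$, $\hat B_u$, $\hat B_f$ and the numbers $\bar\beta_x(\delta)$, $\bar\beta_u(\delta)$, $\bar\beta_f(\delta)$ defined in the context, it holds that $\{x\in\mathbb{R}^n:\hat B_x(x)\le\bar\beta_x(\delta)\}\subseteq\mathcal{X}$, $\{u\in\mathbb{R}^m:\hat B_u(u)\le\bar\beta_u(\delta)\}\subseteq\mathcal{U}$, and $\{x\in\mathbb{R}^n:\hat B_f(x)\le\bar\beta_f(\delta)\}\subseteq\mathcal{X}_f$.
   Context: Constraint sets are (compact) polytopes $\mathcal{X}=\{x\in\mathbb{R}^n: C_xx\le d_x\}$, $\mathcal{U}=\{u\in\mathbb{R}^m: C_uu\le d_u\}$ with $C_x\in\mathbb{R}^{q_x\times n}$, $C_u\in\mathbb{R}^{q_u\times m}$, and $d_x,d_u$ with strictly positive entries; $C^i$ is the $i$-th row, $d^i$ the $i$-th entry. Relaxed logarithmic barrier: fix $\delta\in(0,1]$. The relaxing function $\beta(\cdot;\delta):(-\infty,\delta]\to\mathbb{R}$ is either $\beta_k(z;\delta)=\frac{k-1}{k}\big[\big(\frac{z-k\delta}{(k-1)\delta}\big)^k-1\big]-\ln\delta$ for some even integer $k\ge2$, or $\beta_e(z;\delta)=\exp(1-z/\delta)-1-\ln\delta$. Define $\hat B(z)=-\ln z$ for $z>\delta$ and $\hat B(z)=\beta(z;\delta)$ for $z\le\delta$. Relaxed recentered barriers: with $z_x^i(x)=-C_x^ix+d_x^i$, $\hat B_x(x)=\sum_{i=1}^{q_x}\hat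 B_{x,i}(x)$ where either (gradient recentering) $\hat B_{x,i}(x)=\hat B(z_x^i(x))+\ln d_x^i-C_x^ix/d_x^i$ for all $i$, or (weight recentering) $\hat B_{x,i}(x)=(1+w_x^i)(\hat B(z_x^i(x))+\ln d_x^i)$ with a vector $w_x\ge0$ satisfying $\sum_i(1+w_x^i)(C_x^i)^\top/d_x^i=0$; $\hat B_u$ is defined analogously from $C_u,d_u$ (and a weight vector $w_u$). $\delta$ is such that $\hat B_x(0)=\hat B_u(0)=0$ and $\nabla\hat B_x(0)=0$, $\nabla\hat B_u(0)=0$. Terminal set: $\mathcal{X}_f=\{x\in\mathbb{R}^n:\varphi(x)\le1\}$ where $\varphi:\mathbb{R}^n\to\mathbb{R}_{\ge0}$ is continuously differentiable, convex and positive definite, and $\varphi(A_Kx)\le\varphi(x)$ for all $x\in\mathcal{X}_f$, with $A_K=A+BK$ for a given gain $K$. The relaxed terminal barrier is $\hat B_f(x)=\hat B(1-\varphi(x))$, i.e. $-\ln(1-\varphi(x))$ if $1-\varphi(x)>\delta$ and $\beta(1-\varphi(x);\delta)$ otherwise. Define $\bar\beta_f(\delta)=\beta(0;\delta)$, $\bar\beta_x(\delta)=\min\{\hat B_x(x): x\in\mathbb{R}^n,\ C_x^ix=d_x^i$ for some $i\in\{1,\dots,q_x\}\}$ and $\bar\beta_u(\delta)=\min\{\hat B_u(u): C_u^ju=d_u^j$ for some $j\in\{1,\dots,q_u\}\}$. *)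

(* Defs.v *)
From HB Require Import structures.
From mathcomp Require Import all_boot all_order all_algebra.
From mathcomp Require Import all_classical all_reals all_analysis.
Set Implicit Arguments. Unset Strict Implicit. Unset Printing Implicit Defensive.
Import Order.TTheory GRing.Theory Num.Theory.
Import numFieldNormedType.Exports.
Local Open Scope classical_set_scope.
Local Open Scope ring_scope.

(* Choice of relaxing function beta(.;delta):
   RPoly k : beta_k (k must be an even integer >= 2), RExp : beta_e. *)
Inductive relax_kind := RPoly of nat | RExp.

Definition relax_kind_ok (rk : relax_kind) : Prop :=
  match rk with RPoly k => ~~ odd k /\ (2 <= k)%N | RExp => True end.

Section Barriers.
Variable R : realType.

Definition relax_beta (rk : relax_kind) (delta z : R) : R :=
  match rk with
  | RPoly k =>
      ((k%:R - 1) / k%:R) *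
        (((z - k%:R * delta) / ((k%:R - 1) * delta)) ^+ k - 1) - ln delta
  | RExp => expR (1 - z / delta) - 1 - ln delta
  end.

Definition relaxed_log (rk : relax_kind) (delta z : R) : R :=
  if delta < z then - ln z else relax_beta rk delta z.

Definition polytope (n q : nat) (C : 'M[R]_(q, n)) (d : 'cV[R]_q) : set 'cV[R]_n :=
  [set x | forall i : 'I_q, (C *m x) i 0 <= d i 0].

Inductive recenter (q : nat) := RGrad | RWeight of 'cV[R]_q.

Definition recenter_ok (n q : nat) (C : 'M[R]_(q, n)) (d : 'cV[R]_q)
  (rc : recenter q) : Prop :=
  match rc with
  | RGrad => True
  | RWeight w =>
      (forall i : 'I_q, 0 <= w i 0) /\
      \sum_(i < q) ((1 + w i 0) / d i 0) *: (row i C)^T = 0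
  end.

Definition recentered_barrier (rk : relax_kind) (delta : R) (n q : nat)
  (C : 'M[R]_(q, n)) (d : 'cV[R]_q) (rc : recenter q) (x : 'cV[R]_n) : R :=
  match rc with
  | RGrad =>
      \sum_(i < q) (relaxed_log rk delta (- (C *m x) i 0 + d i 0)
                      + ln (d i 0) - (C *m x) i 0 / d i 0)
  | RWeight w =>
      \sum_(i < q) ((1 + w i 0) *
                      (relaxed_log rk delta (- (C *m x) i 0 + d i 0) + ln (d i 0)))
  end.

(* \bar beta for a polytope barrier: min of the barrier over the union of
   the facet hyperplanes {x | C^i x = d^i} (taken as the infimum). *)
Definition barrier_level (rk : relax_kind) (delta : R) (n q : nat)
  (C : 'M[R]_(q, n)) (d : 'cV[R]_q) (rc : recenter q) : R :=
  inf [set recentered_barrier rk delta C d rc x |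
        x in [set x : 'cV[R]_n | exists i : 'I_q, (C *m x) i 0 = d i 0]].

Definition terminal_barrier (rk : relax_kind) (delta : R) (n : nat)
  (phi : 'cV[R]_n -> R) (x : 'cV[R]_n) : R :=
  relaxed_log rk delta (1 - phi x).

End Barriers.

(* Main.v *)
Require Import Defs.
From HB Require Import structures.
From mathcomp Require Import all_boot all_order all_algebra.
From mathcomp Require Import all_classical all_reals all_analysis.
From mathcomp Require Import ring lra.
Import Order.TTheory GRing.Theory Num.Theory.
Import numFieldNormedType.Exports.
Local Open Scope classical_set_scope.
Local Open Scope ring_scope.



Section Scalar.
Variable R : realType.

Lemma tan_ln (a z : R) : 0 < a -> 0 < z -> z != a ->
  - ln a + (- a^-1) * (z - a) < - ln z.
Proof.
move=> a0 z0 za.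
have lne : ln z - ln a != 0.
  rewrite subr_eq0; apply/negP => /eqP E; move/negP: za; apply.
  by apply/eqP; apply: ln_inj; rewrite ?posrE.
have := expR_gt1Dx lne.
rewrite expRB !lnK ?posrE // => H.
have : ln z - ln a < z / a - 1 by lra.
have -> : z / a - 1 = a^-1 * (z - a) by field; rewrite gt_eqF.
lra.
Qed.

Lemma powconv (U V : R) (n : nat) : 0 <= U -> 0 <= V ->
  U ^+ n.+1 + n.+1%:R * U ^+ n * (V - U) <= V ^+ n.+1.
Proof.
move=> U0 V0; elim: n => [|n IH]; first by rewrite !expr1 expr0; lra.
have P0 : 0 <= U ^+ n by rewrite exprn_ge0.
have H := ler_wpM2l V0 IH.
apply: le_trans H.
rewrite -subr_ge0.
have -> : V * (U ^+ n.+1 + n.+1%:R * U ^+ n * (V - U)) -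
    (U ^+ n.+2 + n.+2%:R * U ^+ n.+1 * (V - U)) = n.+1%:R * U ^+ n * (V - U) ^+ 2.
  rewrite !exprS -[(n.+2)%:R]natr1; ring.
by rewrite mulr_ge0 ?sqr_ge0 // mulr_ge0 // ler0n.
Qed.

Lemma powconv_strict (U V : R) (n : nat) : 0 < U -> 0 <= V -> U != V ->
  U ^+ n.+2 + n.+2%:R * U ^+ n.+1 * (V - U) < V ^+ n.+2.
Proof.
move=> U0 V0 UV.
have IH := @powconv U V n (ltW U0) V0.
have P0 : 0 < U ^+ n by rewrite exprn_gt0.
have sq : 0 < (V - U) ^+ 2 by rewrite exprn_even_gt0 //= subr_eq0 eq_sym.
have H := ler_wpM2l V0 IH.
apply: lt_le_trans H.
rewrite -subr_gt0.
have -> : V * (U ^+ n.+1 + n.+1%:R * U ^+ n * (V - U)) -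
    (U ^+ n.+2 + n.+2%:R * U ^+ n.+1 * (V - U)) = n.+1%:R * U ^+ n * (V - U) ^+ 2.
  rewrite !exprS -[(n.+2)%:R]natr1; ring.
by rewrite mulr_gt0 // mulr_gt0 // ltr0n.
Qed.

End Scalar.



Section Beta.
Variable R : realType.
Variable delta : R.
Hypothesis d0 : 0 < delta.

Definition bp (rk : relax_kind) (z : R) : R :=
  match rk with
  | RPoly k => delta^-1 * ((z - k%:R * delta) / ((k%:R - 1) * delta)) ^+ k.-1
  | RExp => - delta^-1 * expR (1 - z / delta)
  end.

Lemma oddN (n : nat) (x : R) : ~~ odd n -> (- x) ^+ n = x ^+ n.
Proof. by move=> h; rewrite exprNn -signr_odd (negPf h) expr0 mul1r. Qed.

Lemma oddNo (n : nat) (x : R) : odd n -> (- x) ^+ n = - x ^+ n.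
Proof. by move=> h; rewrite exprNn -signr_odd h expr1 mulN1r. Qed.

Lemma tan_beta_poly (n : nat) (a z : R) : ~~ odd n.+2 ->
  a <= delta -> z <= delta -> z != a ->
  relax_beta (RPoly n.+2) delta a + bp (RPoly n.+2) a * (z - a)
    < relax_beta (RPoly n.+2) delta z.
Proof.
move=> ev ad zd za; rewrite /relax_beta /bp /=.
set K : R := n.+2%:R.
have K1 : 0 < K - 1 by rewrite /K -natr1 addrK ltr0n.
have K0 : 0 < K by lra.
have Kd := mulr_gt0 K1 d0.
set A := (z - K * delta) / ((K - 1) * delta).
set A0 := (a - K * delta) / ((K - 1) * delta).
have A00 : A0 < 0.
  rewrite /A0 pmulr_llt0 ?invr_gt0 ?mulr_gt0 //; lra.
have A_0 : A < 0.
  rewrite /A pmulr_llt0 ?invr_gt0 ?mulr_gt0 //; lra.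
have hz : z - a = (A - A0) * ((K - 1) * delta).
  rewrite /A /A0; field; apply/andP; split; rewrite gt_eqF //.
have key : A0 ^+ n.+2 + K * A0 ^+ n.+1 * (A - A0) < A ^+ n.+2.
  have := @powconv_strict R (- A0) (- A) n _ _ _.
  have o1 : odd n.+1 by move: ev => /=; rewrite negbK.
  rewrite [(- A0)^+n.+2]oddN // [(- A)^+n.+2]oddN // oddNo // -/K.
  have -> : - A - - A0 = - (A - A0) by ring.
  have -> : K * - A0 ^+ n.+1 * - (A - A0) = K * A0^+n.+1 * (A - A0) by ring.
  move=> h; apply: h; try lra.
  by rewrite eqr_opp; apply/negP => /eqP E; move: za; rewrite /A /A0 in E *; apply/negP; rewrite negbK; apply/eqP;
    move: E; move/(congr1 (fun t => t * ((K - 1) * delta))); rewrite !mulfVK ?gt_eqF ?mulr_gt0 //; lra.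
rewrite hz.
set X := A ^+ n.+2; set X0 := A0 ^+ n.+2; set P := A0 ^+ n.+1.
rewrite -/X -/X0 -/P in key.
have -> : (K - 1) / K * (X0 - 1) - ln delta + delta^-1 * P * ((A - A0) * ((K - 1) * delta))
   = (K - 1) / K * (X0 - 1 + K * P * (A - A0)) - ln delta.
  field; apply/andP; split; rewrite gt_eqF //.
rewrite ltrD2r ltr_pM2l ?divr_gt0 //; lra.
Qed.

Lemma tan_beta_exp (a z : R) : z != a ->
  relax_beta RExp delta a + bp RExp a * (z - a) < relax_beta RExp delta z.
Proof.
move=> za; rewrite /relax_beta /bp.
set w := 1 - a / delta.
have hv : 1 - z / delta = w + (a - z) / delta by rewrite /w; field; rewrite gt_eqF.
rewrite hv (expRD w).
have ne : (a - z) / delta != 0.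
  by apply: mulf_neq0; [rewrite subr_eq0 eq_sym | rewrite invr_eq0 gt_eqF].
have := expR_gt1Dx ne => h.
have ew := expR_gt0 w.
have h2 : expR w * (1 + (a - z) / delta) < expR w * expR ((a - z) / delta).
  by rewrite ltr_pM2l.
have -> : - delta^-1 * expR w * (z - a) = expR w * ((a - z) / delta).
  by field; rewrite gt_eqF.
rewrite mulrDr mulr1 in h2.
lra.
Qed.

End Beta.
Arguments bp {R}.
Arguments oddN {R}.
Arguments oddNo {R}.



Section Glue.
Variable R : realType.
Variable delta : R.
Hypothesis d0 : 0 < delta.
Variable rk : relax_kind.
Hypothesis rkok : relax_kind_ok rk.

Lemma tan_beta (a z : R) : a <= delta -> z <= delta -> z != a ->
  relax_beta rk delta a + bp delta rk a * (z - a) < relax_beta rk delta z.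
Proof.
move: rkok; case: rk => [k [ev k2]|_] ad zd za; last exact: tan_beta_exp.
case: k ev k2 => [|[|n]] // ev _.
exact: tan_beta_poly.
Qed.

Lemma beta_delta : relax_beta rk delta delta = - ln delta.
Proof.
move: rkok; case: rk => [k [ev k2]|_]; rewrite /relax_beta.
  have K1 : k%:R - 1 != 0 :> R.
    case: k ev k2 => [|[|n]] // _ _; rewrite -natr1 addrK pnatr_eq0 //.
  have -> : (delta - k%:R * delta) / ((k%:R - 1) * delta) = -1.
    by field; rewrite K1 gt_eqF.
  by rewrite -signr_odd (negPf ev) expr0 subrr mulr0 add0r.
by rewrite divff ?gt_eqF // subrr expR0 subrr add0r.
Qed.

Lemma bp_delta : bp delta rk delta = - delta^-1.
Proof.
move: rkok; case: rk => [k [ev k2]|_]; rewrite /bp.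
  have K1 : k%:R - 1 != 0 :> R.
    case: k ev k2 => [|[|n]] // _ _; rewrite -natr1 addrK pnatr_eq0 //.
  have -> : (delta - k%:R * delta) / ((k%:R - 1) * delta) = -1.
    by field; rewrite K1 gt_eqF.
  case: k ev k2 K1 => [|[|n]] // ev _ _ /=.
  have o1 : odd n.+1 by move: ev => /=; rewrite negbK.
  by rewrite -signr_odd o1 expr1 mulrN1.
by rewrite divff ?gt_eqF // subrr expR0 mulr1.
Qed.

Lemma bp_le (a : R) : a <= delta -> bp delta rk a <= - delta^-1.
Proof.
move: rkok; case: rk => [k [ev k2]|_] ad; rewrite /bp.
  case: k ev k2 => [|[|n]] // ev _ /=.
  have o1 : odd n.+1 by move: ev => /=; rewrite negbK.
  set K : R := n.+2%:R.
  have K1 : 0 < K - 1 by rewrite /K -natr1 addrK ltr0n.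
  have Kd := mulr_gt0 K1 d0.
  set A0 := (a - K * delta) / ((K - 1) * delta).
  have A01 : 1 <= - A0.
    rewrite /A0 -mulNr ler_pdivlMr //; lra.
  have : 1 <= (- A0) ^+ n.+1 by rewrite exprn_ege1.
  rewrite oddNo // => h.
  rewrite -mulrN1 ler_pM2l ?invr_gt0 //; lra.
have e1 : 1 <= expR (1 - a / delta).
  have := expR_ge1Dx (1 - a / delta).
  have : a / delta <= 1 by rewrite ler_pdivrMr // mul1r.
  lra.
rewrite mulNr lerN2 -{1}(mulr1 delta^-1) ler_pM2l ?invr_gt0 //.
Qed.

Definition hp (z : R) : R :=
  if delta < z then - z^-1 else bp delta rk z.

Notation h := (relaxed_log rk delta).

Lemma tan_h (a z : R) : z != a -> h a + hp a * (z - a) < h z.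
Proof.
move=> za; rewrite /relaxed_log /hp.
case: (ltrP delta a) => ad; case: (ltrP delta z) => zd.
- apply: tan_ln => //; [exact: lt_trans d0 ad|exact: lt_trans d0 zd].
-
  have {ad} ad : delta < a := ad. have {zd} zd : z <= delta := zd.
  have h1 := @tan_beta delta z (le_refl delta) zd.
  rewrite beta_delta bp_delta in h1.
  have h2 : - ln a + (- a^-1) * (delta - a) < - ln delta.
    apply: tan_ln; [exact: lt_trans d0 ad|exact: d0|by rewrite lt_eqF].
  have h3 : - delta^-1 * (z - delta) >= - a^-1 * (z - delta).
    have a0 : 0 < a := lt_trans d0 ad.
    have ia : a^-1 < delta^-1 by rewrite ltf_pV2 ?posrE.
    nra.
  have : z == delta \/ z != delta by case: eqP; [left|right].
  case=> [/eqP zdd|zdd].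
    subst z; rewrite beta_delta; nra.
  have := h1 zdd; nra.
-
  have {ad} ad : a <= delta := ad. have {zd} zd : delta < z := zd.
  have h1 : - ln delta + (- delta^-1) * (z - delta) < - ln z.
    apply: tan_ln; [exact: d0|exact: lt_trans d0 zd|by rewrite gt_eqF].
  have h3 := @bp_le a ad.
  have h4 : bp delta rk a * (z - delta) <= - delta^-1 * (z - delta).
    rewrite ler_wpM2r //; lra.
  have : delta == a \/ delta != a by case: eqP; [left|right].
  case=> [/eqP dda|dda].
    subst a; rewrite beta_delta bp_delta; nra.
  have h2 := @tan_beta a delta ad (le_refl delta) dda.
  rewrite beta_delta in h2; nra.
- exact: tan_beta.
Qed.

Lemma tan_h_le (a z : R) : h a + hp a * (z - a) <= h z.
Proof.
have [->|za] := eqVneq z a; first by rewrite subrr mulr0 addr0.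
exact/ltW/tan_h.
Qed.

Lemma conv_h (t u v : R) : 0 <= t <= 1 ->
  h (t * u + (1 - t) * v) <= t * h u + (1 - t) * h v.
Proof.
move=> /andP [t0 t1].
set p := t * u + (1 - t) * v.
have h1 := tan_h_le p u; have h2 := tan_h_le p v.
have e : t * (u - p) + (1 - t) * (v - p) = 0 by rewrite /p; ring.
have t1' : 0 <= 1 - t by rewrite subr_ge0.
have -> : h p = t * (h p + hp p * (u - p)) + (1 - t) * (h p + hp p * (v - p)).
  transitivity (h p + hp p * (t * (u - p) + (1 - t) * (v - p))).
    by rewrite e mulr0 addr0.
  ring.
by apply: lerD; apply: ler_wpM2l.
Qed.

Lemma conv_h_strict (t u v : R) : 0 < t < 1 -> u != v ->
  h (t * u + (1 - t) * v) < t * h u + (1 - t) * h v.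
Proof.
move=> /andP [t0 t1] uv.
set p := t * u + (1 - t) * v.
have up : u != p.
  apply/negP => /eqP E.
  have H : (1 - t) * (u - v) = u - p by rewrite /p; ring.
  rewrite -E subrr in H.
  move/eqP: H; rewrite mulf_eq0 => /orP [H|H].
    by move: H; rewrite subr_eq0 => /eqP H; rewrite -H ltxx in t1.
  by move: uv; rewrite -subr_eq0 H.
have h1 := @tan_h p u up; have h2 := tan_h_le p v.
have e : t * (u - p) + (1 - t) * (v - p) = 0 by rewrite /p; ring.
have h1' : t * (h p + hp p * (u - p)) < t * h u by rewrite ltr_pM2l.
have t1' : 0 <= 1 - t by rewrite subr_ge0 ltW.
have h2' := ler_wpM2l t1' h2.
have -> : h p = t * (h p + hp p * (u - p)) + (1 - t) * (h p + hp p * (v - p)).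
  transitivity (h p + hp p * (t * (u - p) + (1 - t) * (v - p))).
    by rewrite e mulr0 addr0.
  ring.
exact: ltr_leD h1' h2'.
Qed.

End Glue.



Lemma sum_strict (R : realType) (q : nat) (F G : 'I_q -> R) (i : 'I_q) :
  (forall j, F j <= G j) -> F i < G i -> \sum_(j < q) F j < \sum_(j < q) G j.
Proof.
move=> le lt; rewrite (bigD1 i) //= [X in _ < X](bigD1 i) //=.
by apply: ltr_leD => //; apply: ler_sum => j _.
Qed.

Lemma sum_comb (R : realType) (q : nat) (F G : 'I_q -> R) (t : R) :
  \sum_(i < q) (t * F i + (1 - t) * G i) = t * \sum_(i < q) F i + (1 - t) * \sum_(i < q) G i.
Proof. by rewrite big_split /= !mulr_sumr. Qed.

Section Bar.
Variable R : realType.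
Variable delta : R.
Hypothesis d0 : 0 < delta.
Variable rk : relax_kind.
Hypothesis rkok : relax_kind_ok rk.
Variables (n q : nat) (C : 'M[R]_(q, n)) (d : 'cV[R]_q) (rc : recenter R q).
Hypothesis dpos : forall i, 0 < d i 0.
Hypothesis rcok : recenter_ok C d rc.

Notation h := (relaxed_log rk delta).
Notation B := (recentered_barrier rk delta C d rc).

Lemma Cscale (t : R) (x : 'cV[R]_n) i : (C *m (t *: x)) i 0 = t * (C *m x) i 0.
Proof. by rewrite -scalemxAr mxE. Qed.

Lemma C0 i : (C *m (0 : 'cV[R]_n)) i 0 = 0.
Proof. by rewrite mulmx0 mxE. Qed.

Lemma arg_eq (t c di : R) : - (t * c) + di = t * (- c + di) + (1 - t) * di.
Proof. ring. Qed.

Lemma comb_grad (t hu hv hp L c di : R) :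
  hp <= t * hu + (1 - t) * hv ->
  hp + L - t * c / di <= t * (hu + L - c / di) + (1 - t) * (hv + L - 0 / di).
Proof.
move=> H.
have E : t * hu + (1 - t) * hv + L - t * c / di =
    t * (hu + L - c / di) + (1 - t) * (hv + L - 0 / di) by ring.
by rewrite -E lerD2r lerD2r.
Qed.

Lemma comb_grad_strict (t hu hv hp L c di : R) :
  hp < t * hu + (1 - t) * hv ->
  hp + L - t * c / di < t * (hu + L - c / di) + (1 - t) * (hv + L - 0 / di).
Proof.
move=> H.
have E : t * hu + (1 - t) * hv + L - t * c / di =
    t * (hu + L - c / di) + (1 - t) * (hv + L - 0 / di) by ring.
by rewrite -E ltrD2r ltrD2r.
Qed.

Lemma comb_w (t hu hv hp L W : R) : 0 < W ->
  hp <= t * hu + (1 - t) * hv ->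
  W * (hp + L) <= t * (W * (hu + L)) + (1 - t) * (W * (hv + L)).
Proof.
move=> W0 H.
have E : W * (t * hu + (1 - t) * hv + L) =
    t * (W * (hu + L)) + (1 - t) * (W * (hv + L)) by ring.
by rewrite -E ler_pM2l // lerD2r.
Qed.

Lemma comb_w_strict (t hu hv hp L W : R) : 0 < W ->
  hp < t * hu + (1 - t) * hv ->
  W * (hp + L) < t * (W * (hu + L)) + (1 - t) * (W * (hv + L)).
Proof.
move=> W0 H.
have E : W * (t * hu + (1 - t) * hv + L) =
    t * (W * (hu + L)) + (1 - t) * (W * (hv + L)) by ring.
by rewrite -E ltr_pM2l // ltrD2r.
Qed.

Lemma B_conv (x : 'cV[R]_n) (t : R) : 0 <= t <= 1 ->
  B (t *: x) <= t * B x + (1 - t) * B 0.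
Proof.
move=> t01; rewrite /recentered_barrier; move: rcok; case: rc => [_|w [w0 _]];
  rewrite -sum_comb; apply: ler_sum => j _;
  rewrite Cscale C0 oppr0 add0r arg_eq.
- by apply: comb_grad; apply: conv_h.
- apply: comb_w; last by apply: conv_h.
  by have := w0 j; lra.
Qed.

Lemma B_conv_strict (x : 'cV[R]_n) (t : R) (i : 'I_q) : 0 < t < 1 ->
  (C *m x) i 0 != 0 ->
  B (t *: x) < t * B x + (1 - t) * B 0.
Proof.
move=> t01 ci.
have t01' : 0 <= t <= 1 by move/andP: t01 => [a b]; rewrite !ltW.
have ne : - (C *m x) i 0 + d i 0 != d i 0.
  by rewrite -subr_eq0 addrK oppr_eq0.
rewrite /recentered_barrier; move: rcok; case: rc => [_|w [w0 _]];
  rewrite -sum_comb; apply: (@sum_strict R q _ _ i) => [j|];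
  rewrite Cscale C0 oppr0 add0r arg_eq.
- by apply: comb_grad; apply: conv_h.
- by apply: comb_grad_strict; apply: conv_h_strict.
- apply: comb_w; last by apply: conv_h.
  by have := w0 j; lra.
- apply: comb_w_strict; last by apply: conv_h_strict.
  by have := w0 i; lra.
Qed.

End Bar.



Lemma B_ge0 (R : realType) (n : nat) (Bf : 'cV[R]_n -> R) :
  (forall x t, 0 <= t <= 1 -> Bf (t *: x) <= t * Bf x + (1 - t) * Bf 0) ->
  Bf 0 = 0 -> differentiable Bf 0 -> (forall v, 'd Bf 0 v = 0) ->
  forall x, 0 <= Bf x.
Proof.
move=> conv B00 dif dz x; rewrite leNgt; apply/negP => Bx.
have dv := @diff_derivable _ _ _ Bf 0 x dif.
have D0 : 'D_x Bf 0 = 0 by rewrite deriveE // dz.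
have cv : (fun h : R => h^-1 *: ((Bf \o shift 0) (h *: x) - Bf 0)) @ 0^' --> 'D_x Bf 0 := dv.
rewrite D0 in cv.
move/cvgrPdist_lt: cv => /(_ (- Bf x)).
rewrite oppr_gt0 => /(_ Bx) H.
move: H; rewrite near_withinE => /nbhs_ballP [e /= e0 He].
set t : R := Num.min (e / 2) (1 / 2).
have t0 : 0 < t by rewrite /t lt_min !divr_gt0.
have te : t < e by rewrite /t gt_min; apply/orP; left; rewrite ltr_pdivrMr //; lra.
have t1 : t < 1 by rewrite /t gt_min; apply/orP; right; lra.
have bt : ball (0:R) e t by rewrite /ball /= sub0r normrN gtr0_norm.
have := He t bt (lt0r_neq0 t0).
rewrite addr0 B00 subr0 sub0r normrN normrZ.
have c := conv x t; rewrite B00 mulr0 addr0 in c.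
have c2 : Bf (t *: x) <= t * Bf x by apply: c; apply/andP; split; apply: ltW.
have tB : t * Bf x < 0 by rewrite pmulr_rlt0.
rewrite gtr0_norm ?invr_gt0 // ltr0_norm; last exact: le_lt_trans c2 tB.
move=> H.
have h1 : - (t * Bf x) <= - Bf (t *: x) by rewrite lerN2.
have ti : 0 <= t^-1 by rewrite invr_ge0 ltW.
have h2 := ler_wpM2l ti h1.
have e1 : t^-1 * - (t * Bf x) = - Bf x by field; rewrite lt0r_neq0.
rewrite e1 in h2.
by have := le_lt_trans h2 H; rewrite ltxx.
Qed.



Lemma poly_sub (R : realType) (delta : R) (d0 : 0 < delta) (rk : relax_kind)
  (rkok : relax_kind_ok rk) (n q : nat) (C : 'M[R]_(q, n)) (d : 'cV[R]_q)
  (rc : recenter R q) (dpos : forall i, 0 < d i 0) (rcok : recenter_ok C d rc) :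
  recentered_barrier rk delta C d rc 0 = 0 ->
  differentiable (recentered_barrier rk delta C d rc) 0 ->
  (forall v, 'd (recentered_barrier rk delta C d rc) 0 v = 0) ->
  [set x | recentered_barrier rk delta C d rc x
                 <= barrier_level rk delta C d rc] `<=` polytope C d.
Proof.
move=> B00 dif dz.
set B := recentered_barrier rk delta C d rc.
have Bge0 : forall x, 0 <= B x.
  apply: B_ge0 => // x t t01.
  exact: (@B_conv R delta d0 rk rkok n q C d rc rcok x t t01).
move=> x /= Hx i; rewrite leNgt; apply/negP => ci.
set c := (C *m x) i 0 in ci.
have di := dpos i.
have c0 : 0 < c by apply: lt_trans ci.
set t := d i 0 / c.
have t0 : 0 < t by rewrite divr_gt0.
have t1 : t < 1 by rewrite ltr_pdivrMr // mul1r.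
have cne : (C *m x) i 0 != 0 by rewrite -/c lt0r_neq0.
have t01 : 0 < t < 1 by rewrite t0 t1.
have st := @B_conv_strict R delta d0 rk rkok n q C d rc rcok x t i t01 cne.
have B00' := B00; rewrite /B in B00'.
rewrite B00' mulr0 addr0 -/B in st.
have yE : (exists j : 'I_q, (C *m (t *: x)) j 0 = d j 0).
  exists i; rewrite Cscale -/c /t mulfVK //; exact: lt0r_neq0.
have lb : has_lbound [set B x | x in [set x : 'cV[R]_n | exists i : 'I_q, (C *m x) i 0 = d i 0]].
  by exists 0 => _ [y _ <-]; exact: Bge0.
have := ge_inf lb; move=> /(_ (B (t *: x))) H.
have H2 : inf [set B x | x in [set x : 'cV[R]_n | exists i : 'I_q, (C *m x) i 0 = d i 0]] <= B (t *: x).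
  by apply: H; exists (t *: x).
have H3 : t * B x <= B x.
  by rewrite ler_piMl // ?Bge0 // ltW.
have := le_lt_trans (le_trans Hx H2) (lt_le_trans st H3).
by rewrite ltxx.
Qed.

Lemma term_sub (R : realType) (delta : R) (d0 : 0 < delta) (rk : relax_kind)
  (rkok : relax_kind_ok rk) (n : nat) (phi : 'cV[R]_n -> R) :
  [set x | terminal_barrier rk delta phi x <= relax_beta rk delta 0]
        `<=` [set x | phi x <= 1].
Proof.
move=> x /= Hx; rewrite leNgt; apply/negP => p1.
rewrite /terminal_barrier in Hx.
set z := 1 - phi x in Hx.
have z0 : z < 0 by rewrite /z subr_lt0.
have := @tan_h R delta d0 rk rkok 0 z (ltr0_neq0 z0).
rewrite /relaxed_log /hp (lt_gtF d0) subr0.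
have bl := @bp_le R delta d0 rk rkok 0 (ltW d0).
have bn : bp delta rk 0 < 0.
  apply: (le_lt_trans bl); rewrite oppr_lt0 invr_gt0 //.
have pos : 0 < bp delta rk 0 * z by rewrite nmulr_rgt0.
move=> H.
rewrite /relaxed_log in Hx.
have := lt_le_trans H Hx.
rewrite -[X in _ < X]addr0 ltrD2l ltNge (ltW pos) //.
Qed.


Theorem lemma1 (R : realType) (n m qx qu : nat)
  (Cx : 'M[R]_(qx, n)) (dx : 'cV[R]_qx) (Cu : 'M[R]_(qu, m)) (du : 'cV[R]_qu)
  (A : 'M[R]_n) (B : 'M[R]_(n, m)) (K : 'M[R]_(m, n))
  (phi : 'cV[R]_n -> R)
  (rk : relax_kind) (delta : R) (rx : recenter R qx) (ru : recenter R qu) :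
  (* compact polytopes with strictly positive right-hand sides *)
  compact (polytope Cx dx) -> compact (polytope Cu du) ->
  (forall i, 0 < dx i 0) -> (forall j, 0 < du j 0) ->
  (* relaxing function and delta in (0,1] *)
  relax_kind_ok rk -> 0 < delta <= 1 ->
  (* recentering (gradient, or weight with admissible weights) *)
  recenter_ok Cx dx rx -> recenter_ok Cu du ru ->
  (* delta chosen such that the barriers vanish with zero gradient at 0 *)
  recentered_barrier rk delta Cx dx rx 0 = 0 ->
  recentered_barrier rk delta Cu du ru 0 = 0 ->
  differentiable (recentered_barrier rk delta Cx dx rx) 0 ->
  (forall v, 'd (recentered_barrier rk delta Cx dx rx) 0 v = 0) ->
  differentiable (recentered_barrier rk delta Cu du ru) 0 ->
  (forall v, 'd (recentered_barrier rk delta Cu du ru) 0 v = 0) ->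
  (* terminal set function phi: C^1, convex, nonnegative, positive definite,
     and invariant under A_K = A + B K on X_f *)
  (forall x, differentiable phi x) ->
  (forall v, continuous (fun x => 'd phi x v)) ->
  (forall x y (t : R), 0 <= t <= 1 ->
     phi (t *: x + (1 - t) *: y) <= t * phi x + (1 - t) * phi y) ->
  (forall x, 0 <= phi x) -> phi 0 = 0 -> (forall x, x != 0 -> 0 < phi x) ->
  (forall x, phi x <= 1 -> phi ((A + B *m K) *m x) <= phi x) ->
  [/\ [set x | recentered_barrier rk delta Cx dx rx x
                 <= barrier_level rk delta Cx dx rx] `<=` polytope Cx dx,
      [set u | recentered_barrier rk delta Cu du ru u
                 <= barrier_level rk delta Cu du ru] `<=` polytope Cu du
    & [set x | terminal_barrier rk delta phi x <= relax_beta rk delta 0]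
        `<=` [set x | phi x <= 1]].
Proof.
move=> _ _ dxp dup rkok /andP [d0 _] rxok ruok Bx0 Bu0 difx dzx difu dzu _ _ _ _ _ _ _.
split.
- exact: (@poly_sub R delta d0 rk rkok n qx Cx dx rx dxp rxok Bx0 difx dzx).
- exact: (@poly_sub R delta d0 rk rkok m qu Cu du ru dup ruok Bu0 difu dzu).
- exact: (@term_sub R delta d0 rk rkok n phi).
Qed.
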